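(* Let $S\ge 1$ be an integer, let $Q_{\boldsymbol{X}}$ be a probability distribution on a covariate space $\mathcal{X}$, and let $\tau^{(1)},\ldots,\tau^{(S)}\in L_2(Q_{\boldsymbol{X}})$. Let $\mathcal{F}\subset L_2(Q_{\boldsymbol{X}})$ be a model class that contains the convex hull of $\{\tau^{(1)},\ldots,\tau^{(S)}\}$. Consider the minimax problem \[ f_{\text{regret}}^*=\underset{f\in\mathcal{F}}{\arg\min}\ \max_{Q\in\mathcal{C}(Q_{\boldsymbol{X}})}\ \mathbb{E}_{Q_{\boldsymbol{X}}}\big[(f(\boldsymbol{X})-\tau_Q(\boldsymbol{X}))^2\big]. \] This problem can be equivalently expressed as \[ \{f_{\text{regret}}^*, R^*\}=\underset{f\in\mathcal{F},\,R\in\mathbb{R}}{\arg\min}\ R\quad\text{subject to}\quad \mathbb{E}_{Q_{\boldsymbol{X}}}\big[(f(\boldsymbol{X})-\tau^{(s)}(\boldsymbol{X}))^2\big]\le R\ \text{ for all } s\in\{1,\ldots,S\}, \] where $R^*$ denotes the smallest worst-case value achieved by $f_{\text{regret}}^*$. Furthermore, the solution $\{f_{\text{regret}}^*,R^*\}$ exists and there exist $q_1^*,\ldots,q_S^*$ such that \[ f_{\text{regret}}^*(\cdot)=\sum_{s=1}^S q_s^*\,\tau^{(s)}(\cdot), \] \[ q_s^*\Big(\mathbb{E}_{Q_{\boldsymbol{X}}}\big[(f_{\text{regret}}^*(\boldsymbol{X})-\tau^{(s)}(\boldsymbol{X}))^2\big]-R^*\Big)=0\quad\text{for all } s, \] \[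 \mathbb{E}_{Q_{\boldsymbol{X}}}\big[(f_{\text{regret}}^*(\boldsymbol{X})-\tau^{(s)}(\boldsymbol{X}))^2\big]\le R^*\quad\text{for all } s, \] \[ \sum_{s=1}^S q_s^*=1,\qquad q_s^*\ge 0\ \text{ for all } s. \]
   Context: Setting: there are $S$ source sites; site $s$ has a joint distribution $P^{(s)}$ of potential outcomes $(Y(1),Y(0))$ and covariates $\boldsymbol{X}\in\mathcal{X}$, with site-specific conditional average treatment effect (CATE) $\tau^{(s)}(\boldsymbol{x})=\mathbb{E}_{P^{(s)}}[Y(1)-Y(0)\mid \boldsymbol{X}=\boldsymbol{x}]$. For a joint distribution $Q$ of $(Y(1),Y(0),\boldsymbol{X})$, $\tau_Q(\boldsymbol{x})=\mathbb{E}_Q[Y(1)-Y(0)\mid\boldsymbol{X}=\boldsymbol{x}]$. $\Delta_{S-1}=\{\boldsymbol{q}\in\mathbb{R}^S:\sum_s q_s=1,\ \min_s q_s\ge 0\}$. The multisite uncertainty set is $\mathcal{C}(Q_{\boldsymbol{X}})=\{Q=(Q_{\boldsymbol{X}},Q_{(Y(1),Y(0))\mid\boldsymbol{X}}):\ \tau_Q(\cdot)=\sum_{s=1}^S q_s\tau^{(s)}(\cdot)\text{ for some }\boldsymbol{q}\in\Delta_{S-1}\}$, i.e. all joint distributions with covariate marginal $Q_{\boldsymbol{X}}$ whose CATE is a convex combination of the site CATEs. $L_2(Q_{\boldsymbol{X}})$ is the space of square-integrable measurable functions with respect to $Q_{\boldsymbol{X}}$. *)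

(* Defs.v *)
From HB Require Import structures.
From mathcomp Require Import all_boot all_order all_algebra.
From mathcomp Require Import all_classical all_reals all_analysis.
Set Implicit Arguments. Unset Strict Implicit. Unset Printing Implicit Defensive.
Import Order.TTheory GRing.Theory Num.Theory.
Local Open Scope classical_set_scope.
Local Open Scope ring_scope.

Section Defs.
Context (d : measure_display) (T : measurableType d) (R : realType)
        (P : probability T R).

Definition memL2 (g : T -> R) : Prop :=
  measurable_fun [set: T] g /\ P.-integrable [set: T] (fun x => ((g x) ^+ 2)%:E).

Definition simplex (S : nat) (q : 'I_S -> R) : Prop :=
  (forall s, 0 <= q s) /\ \sum_(s < S) q s = 1.

Definition combo (S : nat) (tau : 'I_S -> T -> R) (q : 'I_S -> R) : T -> R :=
  fun x => \sum_(s < S) q s * tau s x.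

Definition mse (f t : T -> R) : \bar R :=
  (\int[P]_x (((f x - t x) ^+ 2)%:E))%E.

(* The set of CATE functions tau_Q for Q in the multisite uncertainty set
   C(Q_X): the convex combinations of the site CATEs. *)
Definition cate_set (S : nat) (tau : 'I_S -> T -> R) : set (T -> R) :=
  [set combo tau q | q in simplex (S:=S)].

Definition worst_risk (S : nat) (tau : 'I_S -> T -> R) (f : T -> R) : \bar R :=
  ereal_sup [set mse f t | t in cate_set tau].

Definition minimax_sol (S : nat) (tau : 'I_S -> T -> R) (F : set (T -> R))
    (f : T -> R) : Prop :=
  F f /\ forall g, F g -> (worst_risk tau f <= worst_risk tau g)%E.

Definition feasible (S : nat) (tau : 'I_S -> T -> R) (F : set (T -> R))
    (f : T -> R) (r : R) : Prop :=
  F f /\ forall s, (mse f (tau s) <= r%:E)%E.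

Definition constr_sol (S : nat) (tau : 'I_S -> T -> R) (F : set (T -> R))
    (f : T -> R) (r : R) : Prop :=
  feasible tau F f r /\ forall g r', feasible tau F g r' -> r <= r'.

End Defs.

(* Main.v *)
Require Import Defs.
From HB Require Import structures.
From mathcomp Require Import all_boot all_order all_algebra.
From mathcomp Require Import all_classical all_reals all_analysis.
From mathcomp Require Import ring lra.
From mathcomp Require Import measurable_realfun matrix_normedtype.
Import Order.TTheory GRing.Theory Num.Theory.
Import numFieldNormedType.Exports.
Local Open Scope classical_set_scope.
Local Open Scope ring_scope.

Lemma pw_id (R : realType) (S : nat) (q a : 'I_S -> R) (y : R) :
  \sum_s q s = 1 ->
  \sum_s q s * (y - a s) ^+ 2 =
  (y - \sum_s q s * a s) ^+ 2 + \sum_s q s * (\sum_u q u * a u - a s) ^+ 2.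
Proof.
move=> hq; set m := \sum_u q u * a u.
have e s : q s * (y - a s) ^+ 2 = q s * (y - m) ^+ 2
   + 2 * (y - m) * (q s * m - q s * a s) + q s * (m - a s) ^+ 2 by ring.
rewrite (eq_bigr _ (fun s _ => e s)) !big_split /= -mulr_suml hq mul1r.
rewrite -mulr_sumr sumrB -mulr_suml hq mul1r subrr mulr0 addr0 //.
Qed.

Lemma delta_sum (R : realType) (S : nat) (a : 'I_S -> R) (t : 'I_S) :
  \sum_i (i == t)%:R * a i = a t.
Proof.
rewrite (bigD1 t) //= eqxx mul1r big1 ?addr0 // => i /negbTE ->; by rewrite mul0r.
Qed.

Section H.
Context {d : measure_display} {T : measurableType d} {R : realType}
        {P : probability T R}.

Lemma mfB {f g : T -> R} : measurable_fun setT f -> measurable_fun setT g ->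
  measurable_fun setT (fun x => f x - g x).
Proof. by move=> hf hg; exact: measurable_realfun.measurable_funB. Qed.

Lemma mfM {f g : T -> R} : measurable_fun setT f -> measurable_fun setT g ->
  measurable_fun setT (fun x => f x * g x).
Proof. by move=> hf hg; exact: measurable_realfun.measurable_funM. Qed.

Lemma mfE {f : T -> R} : measurable_fun setT f ->
  measurable_fun setT (fun x => (f x)%:E).
Proof. by move=> hf; exact: measurableT_comp. Qed.

Lemma mfsq {f g : T -> R} : measurable_fun setT f -> measurable_fun setT g ->
  measurable_fun setT (fun x => ((f x - g x) ^+ 2)%:E).
Proof.
move=> hf hg; apply: mfE.
have := mfM (mfB hf hg) (mfB hf hg).
by apply: eq_measurable_fun => x _; rewrite expr2.
Qed.

Lemma int_sqdiff {f g : T -> R} : memL2 P f -> memL2 P g ->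
  P.-integrable setT (fun x => ((f x - g x) ^+ 2)%:E).
Proof.
move=> [mf if2] [mg ig2].
pose G := (fun x => ((2:R)%:E * ((f x) ^+ 2)%:E + (2:R)%:E * ((g x) ^+ 2)%:E)%E).
eapply (@le_integrable _ _ _ P _ measurableT _ G).
- exact: mfsq.
- move=> x _; rewrite /G -!EFinM -EFinD !abse_EFin lee_fin.
  have h1 := sqr_ge0 (f x + g x); have h2 := sqr_ge0 (f x); have h3 := sqr_ge0 (g x).
  have h4 := sqr_ge0 (f x - g x).
  rewrite !ger0_norm //; [nra|nra].
- by apply: integrableD => //; apply: integrableZl.
Qed.

Lemma int_prod {f g : T -> R} : memL2 P f -> memL2 P g ->
  P.-integrable setT (fun x => (f x * g x)%:E).
Proof.
move=> [mf if2] [mg ig2].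
pose G := (fun x => (((f x) ^+ 2)%:E + ((g x) ^+ 2)%:E)%E).
eapply (@le_integrable _ _ _ P _ measurableT _ G).
- exact/mfE/mfM.
- move=> x _; rewrite /G -EFinD !abse_EFin lee_fin.
  have h1 := sqr_ge0 (f x + g x); have h2 := sqr_ge0 (f x); have h3 := sqr_ge0 (g x).
  have h4 := sqr_ge0 (f x - g x).
  rewrite [X in _ <= X]ger0_norm; last nra.
  rewrite ler_norml; apply/andP; split; nra.
- exact: integrableD.
Qed.

Definition msr (f g : T -> R) : R := fine (mse P f g).

Lemma mseE {f g} : memL2 P f -> memL2 P g -> mse P f g = (msr f g)%:E.
Proof.
move=> hf hg; rewrite /msr fineK //; exact: integrable_fin_num (int_sqdiff hf hg).
Qed.

Lemma mse_ge0 f g : (0 <= mse P f g)%E.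
Proof. by apply: integral_ge0 => x _; rewrite lee_fin sqr_ge0. Qed.

Lemma msr_ge0 f g : 0 <= msr f g.
Proof. exact/fine_ge0/mse_ge0. Qed.

End H.
Arguments msr {d T R} P f g.
Arguments delta_sum {R S} a t.
Arguments pw_id {R S} q a y.

Section EVT.
Context {R : realType} {S : nat}.

Lemma cont_sum (I : Type) (s : seq I) (h : I -> 'rV[R]_S -> R) :
  (forall i, continuous (h i)) -> continuous (fun v => \sum_(i <- s) h i v).
Proof.
move=> hc; elim: s => [|i s IH].
  rewrite (_ : (fun v => _) = fun _ => 0); first exact: cst_continuous.
  by apply/funext => v; rewrite big_nil.
rewrite (_ : (fun v => _) = h i + (fun v => \sum_(j <- s) h j v)).
  by move=> v; apply: continuousD; [exact: hc | exact: IH].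
by apply/funext => v; rewrite big_cons.
Qed.

Lemma coordc (i : 'I_S) : continuous (fun v : 'rV[R]_S => v ord0 i).
Proof. exact: coord_continuous. Qed.

Definition PsiG (Gm : 'I_S -> 'I_S -> R) (v : 'I_S -> R) : R :=
  \sum_s v s * Gm s s - \sum_u \sum_w v u * v w * Gm u w.

Lemma PsiG_cont Gm : continuous (fun v : 'rV[R]_S => PsiG Gm (fun i => v ord0 i)).
Proof.
rewrite /PsiG => v; apply: continuousB.
  apply: cont_sum => s x.
  apply: (continuousM (s := fun v : 'rV[R]_S => v ord0 s) (t := fun=> Gm s s));
    [exact: coordc | exact: cst_continuous].
apply: cont_sum => u; apply: cont_sum => w x.
apply: (continuousM (s := fun v : 'rV[R]_S => v ord0 u * v ord0 w) (t := fun=> Gm u w));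
  last exact: cst_continuous.
by apply: (continuousM (s := fun v : 'rV[R]_S => v ord0 u) (t := fun v : 'rV[R]_S => v ord0 w)); exact: coordc.
Qed.

Definition simplexV := [set v : 'rV[R]_S | (forall i, 0 <= v ord0 i) /\ \sum_i v ord0 i = 1].

Lemma simplexV_closed : closed simplexV.
Proof.
rewrite (_ : simplexV = (\bigcap_(i in setT) ((fun v : 'rV[R]_S => v ord0 i) @^-1` [set x | 0 <= x]))
   `&` ((fun v : 'rV[R]_S => \sum_i v ord0 i) @^-1` [set x | x = 1])).
  apply: closedI.
    apply: closed_bigI => i _; apply: preimage_closed; last exact: closed_ge.
    by move=> v _; exact: coordc.
  apply: preimage_closed; last exact: closed_eq.
  by move=> v _; apply: cont_sum => i; exact: coordc.
apply/seteqP; split => v /=.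
  by move=> [h1 h2]; split => // i _; exact: h1.
by move=> [h1 h2]; split => // i; exact: h1.
Qed.

Lemma simplexV_compact : compact simplexV.
Proof.
have := @rV_compact R S (fun=> `[0, 1]%classic).
move=> /(_ (fun _ => @segment_compact R 0 1)) hc.
apply: (subclosed_compact simplexV_closed hc).
move=> v [h1 h2] i /=; rewrite in_itv /= h1 /=.
rewrite -h2 (bigD1 i) //= lerDl; apply: sumr_ge0 => j _; exact: h1.
Qed.

Lemma exists_max (Gm : 'I_S -> 'I_S -> R) : (0 < S)%N ->
  exists q : 'I_S -> R, simplex q /\
     forall p, simplex p -> PsiG Gm p <= PsiG Gm q.
Proof.
move=> hS.
have ne : simplexV !=set0.
  exists (\row_i (S%:R^-1 : R)); split => [i|]; rewrite ?mxE ?invr_ge0 ?ler0n //.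
  under eq_bigr do rewrite mxE.
  rewrite sumr_const card_ord (_ : S%:R^-1 *+ S = S%:R^-1 * S%:R :> R); last by rewrite mulr_natr.
  by rewrite mulVf // pnatr_eq0 -lt0n.
have [c cA cmax] := EVT_max_rV ne simplexV_compact
   (continuous_subspaceT (PsiG_cont Gm)).
move: cA; rewrite inE => -[c0 c1].
exists (fun i => c ord0 i); split; first by split.
move=> p [p0 p1].
have := cmax (\row_i p i); rewrite inE.
have -> : (fun i => (\row_i0 p i0) ord0 i) = p by apply/funext => i; rewrite mxE.
apply; split => [i|]; first by rewrite mxE.
by under eq_bigr do rewrite mxE.
Qed.

End EVT.

Section H2.
Context {d : measure_display} {T : measurableType d} {R : realType}
        (P : probability T R) (S : nat) (tau : 'I_S -> T -> R)
        (htau : forall s, memL2 P (tau s))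
        (hq2 : forall q, simplex q -> memL2 P (combo tau q)).

Lemma ID_e (g : T -> R) (q : 'I_S -> R) : measurable_fun setT g -> simplex q ->
  (\sum_s (q s)%:E * mse P g (tau s) =
   mse P g (combo tau q) + \sum_s (q s)%:E * mse P (combo tau q) (tau s))%E.
Proof.
move=> mg hq; have [mq _] := hq2 q hq; have [q0 q1] := hq.
have mt s : measurable_fun setT (tau s) by case: (htau s).
rewrite /mse.
transitivity (\int[P]_x (\sum_s ((q s * (g x - tau s x) ^+ 2)%:E)))%E.
  rewrite ge0_integral_sum //; last first.
  - by move=> s x _; rewrite lee_fin mulr_ge0 // sqr_ge0.
  - move=> s; under eq_fun do rewrite EFinM.
    by apply: measurable_funeM; apply: mfsq.
  apply: eq_bigr => s _; rewrite (@eq_integral _ _ _ P _ (fun x => (q s)%:E * ((g x - tau s x) ^+ 2)%:E)%E); last by move=> x _; rewrite EFinM.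
  rewrite ge0_integralZl_EFin //; first (by move=> x _; rewrite lee_fin sqr_ge0); exact: mfsq.
transitivity (\int[P]_x (((g x - combo tau q x) ^+ 2)%:E +
      \sum_s ((q s * (combo tau q x - tau s x) ^+ 2)%:E)))%E.
  apply: eq_integral => x _; rewrite !sumEFin -EFinD; congr (_%:E).
  by rewrite pw_id.
rewrite ge0_integralD //; last first.
- apply: emeasurable_sum => s; under eq_fun do rewrite EFinM.
  by apply: measurable_funeM; apply: mfsq.
- by move=> x _; rewrite sumEFin lee_fin; apply: sumr_ge0 => s _; rewrite mulr_ge0 // sqr_ge0.
- exact: mfsq.
- by move=> x _; rewrite lee_fin sqr_ge0.
congr (_ + _)%E.
rewrite ge0_integral_sum //; last first.
- by move=> s x _; rewrite lee_fin mulr_ge0 // sqr_ge0.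
- move=> s; under eq_fun do rewrite EFinM.
  by apply: measurable_funeM; apply: mfsq.
apply: eq_bigr => s _; under eq_integral => x _ do rewrite EFinM.
rewrite ge0_integralZl_EFin //; first (by move=> x _; rewrite lee_fin sqr_ge0); exact: mfsq.
Qed.


Lemma ID_r (g : T -> R) (q : 'I_S -> R) : memL2 P g -> simplex q ->
  \sum_s q s * msr P g (tau s) =
  msr P g (combo tau q) + \sum_s q s * msr P (combo tau q) (tau s).
Proof.
move=> hg hq; have := ID_e g q (proj1 hg) hq.
rewrite (mseE hg (hq2 q hq)).
under eq_bigr => s _ do rewrite (mseE hg (htau s)) -EFinM.
under [X in (_ + X)%E]eq_bigr => s _ do rewrite (mseE (hq2 q hq) (htau s)) -EFinM.
by rewrite !sumEFin -EFinD => -[].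
Qed.

Definition G (u w : 'I_S) : R := fine (\int[P]_x ((tau u x * tau w x)%:E)).

Lemma GE u w : (\int[P]_x ((tau u x * tau w x)%:E) = (G u w)%:E)%E.
Proof. by rewrite /G fineK //; apply: integrable_fin_num => //; exact: (int_prod (htau u) (htau w)). Qed.

Lemma gram (c : 'I_S -> R) :
  (\int[P]_x (((\sum_u c u * tau u x) ^+ 2)%:E) =
   (\sum_u \sum_w c u * c w * G u w)%:E)%E.
Proof.
have pw x : (\sum_u c u * tau u x) ^+ 2 =
    \sum_u \sum_w (c u * c w) * (tau u x * tau w x).
  rewrite expr2 mulr_suml; apply: eq_bigr => u _; rewrite mulr_sumr.
  by apply: eq_bigr => w _; ring.
have ip u w : P.-integrable setT (fun x => ((c u * c w) * (tau u x * tau w x))%:E).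
  under eq_fun do rewrite EFinM; apply: integrableZl => //. exact (int_prod (htau u) (htau w)).
rewrite (@eq_integral _ _ _ P _ (fun x => \sum_u (\sum_w ((c u * c w) * (tau u x * tau w x))%:E))%E); last first.
  by move=> x _; rewrite pw -sumEFin; apply: eq_bigr => u _; rewrite sumEFin.
rewrite integral_sum; first last.
- by move=> u; apply: (integrable_sum measurableT) => w _; exact: ip.
- exact: measurableT.
rewrite -sumEFin; apply: eq_bigr => u _.
rewrite integral_sum; first last.
- by move=> w; exact: ip.
- exact: measurableT.
rewrite -sumEFin; apply: eq_bigr => w _.
under eq_integral do rewrite EFinM.
rewrite integralZl; first by rewrite GE -EFinM.
- exact: measurableT.
- exact (int_prod (htau u) (htau w)).
Qed.

Definition Psi (v : 'I_S -> R) : R :=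
  \sum_s v s * G s s - \sum_u \sum_w v u * v w * G u w.

Lemma L2_0 : memL2 P (fun _ => 0 : R).
Proof.
split; first exact: measurable_cst.
apply: eq_integrable (integrable0 P setT) => //= x _; by rewrite expr0n.
Qed.

Lemma Psi_eq q : simplex q ->
  \sum_s q s * msr P (combo tau q) (tau s) = Psi q.
Proof.
move=> hq; have := ID_r _ q L2_0 hq.
have e1 s : msr P (fun _ => 0) (tau s) = G s s.
  rewrite /msr /mse /G; congr fine; apply: eq_integral => x _.
  by rewrite sub0r sqrrN expr2.
have e2 : msr P (fun _ => 0) (combo tau q) = \sum_u \sum_w q u * q w * G u w.
  rewrite /msr /mse.
  rewrite (@eq_integral _ _ _ P _ (fun x => ((\sum_u q u * tau u x) ^+ 2)%:E)).
    by rewrite gram.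
  by move=> x _; rewrite sub0r sqrrN.
under eq_bigr => s _ do rewrite e1.
rewrite e2 /Psi => ->; ring.
Qed.

End H2.

Section H4.
Context {d : measure_display} {T : measurableType d} {R : realType}
        (P : probability T R) (S : nat) (hS : (0 < S)%N) (tau : 'I_S -> T -> R)
        (htau : forall s, memL2 P (tau s))
        (hq2 : forall q, simplex q -> memL2 P (combo tau q)).

Lemma dsum1 (t : 'I_S) : \sum_i ((i == t)%:R : R) = 1.
Proof. by rewrite -[RHS](delta_sum (fun=> 1) t); apply: eq_bigr => i _; rewrite mulr1. Qed.

Lemma kkt_pos (q : 'I_S -> R) : simplex q ->
  (forall p, simplex p -> Psi P S tau p <= Psi P S tau q) ->
  forall s t, 0 < q s ->
  msr P (combo tau q) (tau t) <= msr P (combo tau q) (tau s).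
Proof.
move=> hq qmax s t qs.
set f := combo tau q; set D := fun s => msr P f (tau s).
rewrite -/(D t) -/(D s) leNgt; apply/negP => hlt.
have tns : t != s by apply: contraTneq hlt => ->; rewrite ltxx.
set N := msr P (tau s) (tau t); have N0 : 0 <= N := msr_ge0 _ _.
set e := Num.min (q s) ((D t - D s) / (N + 1)).
have N1 : 0 < N + 1 by rewrite ltr_wpDl.
have e0 : 0 < e by rewrite lt_min qs /= divr_gt0 // subr_gt0.
have es : e <= q s by rewrite ge_min lexx.
have e2 : e <= (D t - D s) / (N + 1) by rewrite ge_min lexx orbT.
pose q' i := q i + e * ((i == t)%:R - (i == s)%:R).
have hq' : simplex q'.
  split.
    move=> i; rewrite /q'; case: (eqVneq i t) => [->|it].
      by rewrite (negbTE tns) subr0 mulr1 addr_ge0 // ?(ltW e0) // (proj1 hq).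
    rewrite sub0r; case: (eqVneq i s) => [->|iS].
      by rewrite mulrN1 subr_ge0.
    by rewrite oppr0 mulr0 addr0 (proj1 hq).
  by rewrite /q' big_split /= (proj2 hq) -mulr_sumr sumrB !dsum1 subrr mulr0 addr0.
have f'E x : combo tau q' x = f x + e * (tau t x - tau s x).
  rewrite /combo /q'; under eq_bigr do rewrite mulrDl.
  rewrite big_split /=; congr (_ + _).
  rewrite -(delta_sum (fun i => tau i x) t) -(delta_sum (fun i => tau i x) s).
  by rewrite mulrBr !mulr_sumr -sumrB; apply: eq_bigr => i _; ring.
have mff' : msr P f (combo tau q') = e ^+ 2 * N.
  rewrite /msr /mse.
  rewrite (@eq_integral _ _ _ P _ (fun x => ((e ^+ 2)%:E * ((tau s x - tau t x) ^+ 2)%:E)%E)); last first.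
    by move=> x _; rewrite f'E -EFinM; congr EFin; ring.
  rewrite ge0_integralZl_EFin //; last 3 first.
  - by move=> x _; rewrite lee_fin sqr_ge0.
  - exact: (mfsq (proj1 (htau s)) (proj1 (htau t))).
  - exact: sqr_ge0.
  have := mseE (htau s) (htau t); rewrite /mse => ->.
  by rewrite -EFinM.
have hid := ID_r P S tau htau hq2 f q' (hq2 q hq) hq'.
rewrite (Psi_eq P S tau htau hq2 q' hq') mff' in hid.
have hsum : \sum_u q' u * D u = \sum_u q u * D u + e * (D t - D s).
  rewrite /q'; under eq_bigr do rewrite mulrDl.
  rewrite big_split /=; congr (_ + _).
  rewrite -(delta_sum D t) -(delta_sum D s).
  by rewrite mulrBr !mulr_sumr -sumrB; apply: eq_bigr => i _; ring.
rewrite -/D hsum (Psi_eq P S tau htau hq2 q hq) in hid.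
have := qmax q' hq'.
move: e2; rewrite ler_pdivlMr // => e2.
nra.
Qed.


Lemma kkt : exists q r, simplex q /\
  (forall s, msr P (combo tau q) (tau s) <= r) /\
  (forall s, q s * (msr P (combo tau q) (tau s) - r) = 0) /\
  r = \sum_s q s * msr P (combo tau q) (tau s).
Proof.
have [q [hq qmax]] := exists_max (G P S tau) hS.
set D := fun s => msr P (combo tau q) (tau s).
have [s0 qs0] : exists s, 0 < q s.
  apply: contrapT => H.
  have : \sum_s q s <= 0.
    apply: sumr_le0 => i _; rewrite leNgt; apply/negP => hi; apply: H; by exists i.
  by rewrite (proj2 hq) ler10.
have hmax t : D t <= D s0 := kkt_pos q hq qmax s0 t qs0.
have hpos u : 0 < q u -> D u = D s0.
  by move=> qu; apply/le_anti; rewrite hmax (kkt_pos q hq qmax u s0 qu).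
have hz u : q u * (D u - D s0) = 0.
  have := proj1 hq u; rewrite le_eqVlt => /orP[/eqP <-|qu]; first by rewrite mul0r.
  by rewrite hpos // subrr mulr0.
exists q, (D s0); split => //; split => //; split => //.
symmetry; rewrite (eq_bigr (fun u => q u * D s0 + q u * (D u - D s0))); last first.
  by move=> u _; rewrite /D; ring.
by rewrite big_split /= -mulr_suml (proj2 hq) mul1r big1 ?addr0 // => u _; exact: hz.
Qed.

End H4.

Theorem proposition1 (d : measure_display) (T : measurableType d) (R : realType)
    (P : probability T R) (S : nat) (hS : (0 < S)%N)
    (tau : 'I_S -> T -> R) (htau : forall s, memL2 P (tau s))
    (F : set (T -> R)) (hFL2 : forall f, F f -> memL2 P f)
    (hF : forall q, simplex q -> F (combo tau q)) :
  (* the inner maximum reduces to the maximum over the sites *)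
  (forall f, F f ->
     worst_risk P tau f = (\big[Order.max/-oo]_(s < S) mse P f (tau s))%E) /\
  (* equivalence of the two problems *)
  (forall f r, constr_sol P tau F f r <->
     (minimax_sol P tau F f /\ worst_risk P tau f = r%:E)) /\
  (* existence *)
  (exists f r, constr_sol P tau F f r) /\
  (* characterization of the solution *)
  (forall f r, constr_sol P tau F f r ->
     exists q : 'I_S -> R,
       {ae P, forall x, f x = combo tau q x} /\
       (forall s, ((q s)%:E * (mse P f (tau s) - r%:E) = 0)%E) /\
       (forall s, (mse P f (tau s) <= r%:E)%E) /\
       \sum_(s < S) q s = 1 /\ (forall s, 0 <= q s)).
Proof.
have hq2 : forall q, simplex q -> memL2 P (combo tau q).
  by move=> q h; apply: hFL2; exact: hF.
have e_simp s : simplex (fun i : 'I_S => ((i == s)%:R : R)).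
  by split => [i|]; [exact: ler0n | exact: dsum1].
have e_combo s : combo tau (fun i : 'I_S => ((i == s)%:R : R)) = tau s.
  by apply/funext => x; rewrite /combo delta_sum.
have P1 f : memL2 P f ->
    worst_risk P tau f = (\big[Order.max/-oo]_(s < S) mse P f (tau s))%E.
  move=> hf; apply/le_anti/andP; split.
  - apply: ge_ereal_sup => _ [t [q hq <-] <-].
    have hid := ID_e P S tau htau hq2 f q (proj1 hf) hq.
    have h1 : (mse P f (combo tau q) <= \sum_s (q s)%:E * mse P f (tau s))%E.
      rewrite hid leeDl // sume_ge0 // => s _.
      by rewrite mule_ge0 // ?lee_fin ?(proj1 hq) // mse_ge0.
    apply: (le_trans h1).
    have h2 : (\sum_s (q s)%:E * mse P f (tau s) <=
        \sum_s (q s)%:E * (\big[Order.max/-oo]_(s < S) mse P f (tau s)))%E.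
      apply: lee_sum => s _; apply: lee_wpmul2l; first by rewrite lee_fin (proj1 hq).
      exact: le_bigmax.
    apply: (le_trans h2); rewrite -ge0_sume_distrl; last by move=> s _; rewrite lee_fin (proj1 hq).
    by rewrite sumEFin (proj2 hq) mul1e.
  - apply: bigmax_le => [|s _]; first exact: leNye.
    apply: ereal_sup_ubound; exists (tau s) => //.
    by exists (fun i : 'I_S => ((i == s)%:R : R)); [exact: e_simp | exact: e_combo].
have Pa f s : memL2 P f -> (mse P f (tau s) <= worst_risk P tau f)%E.
  by move=> hf; rewrite P1 //; exact: le_bigmax.
have Pb f r : memL2 P f -> (forall s, mse P f (tau s) <= r%:E)%E ->
    (worst_risk P tau f <= r%:E)%E.
  by move=> hf h; rewrite P1 //; apply: bigmax_le => //; exact: leNye.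
have Pc f : memL2 P f -> worst_risk P tau f = (fine (worst_risk P tau f))%:E.
  move=> hf; rewrite fineK // ge0_fin_numE; last first.
    by apply: le_trans (Pa f (Ordinal hS) hf); exact: mse_ge0.
  have hb : (worst_risk P tau f <= (\sum_s msr P f (tau s))%:E)%E.
    apply: (Pb _ _ hf) => s; rewrite (mseE hf (htau s)) lee_fin (bigD1 s) //= lerDl.
    by apply: sumr_ge0 => i _; exact: msr_ge0.
  exact: le_lt_trans hb (ltry _).
have [q [r [hq [hle [hcs hr]]]]] := kkt P S hS tau htau hq2.
set fs := combo tau q.
have fsL2 := hq2 q hq.
have feas_s : feasible P tau F fs r.
  by split; [exact: hF | move=> s; rewrite (mseE fsL2 (htau s)) lee_fin].
have lower g r' : feasible P tau F g r' -> r <= r'.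
  move=> [Fg hg]; have gL2 := hFL2 g Fg.
  have hg' s : msr P g (tau s) <= r' by have := hg s; rewrite (mseE gL2 (htau s)) lee_fin.
  have := ID_r P S tau htau hq2 g q gL2 hq; rewrite -/fs -hr => hid.
  have : \sum_s q s * msr P g (tau s) <= r'.
    rewrite -[r']mul1r -(proj2 hq) mulr_suml; apply: ler_sum => s _.
    by apply: ler_wpM2l; [exact: (proj1 hq) | exact: hg'].
  rewrite hid; have := @msr_ge0 _ _ _ P g fs; lra.
have csol : constr_sol P tau F fs r by split; [exact: feas_s | exact: lower].
split; first by move=> f Ff; exact: (P1 f (hFL2 f Ff)).
split.
  move=> f r0; split.
  - move=> [[Ff hf] hmin]; have fL2 := hFL2 f Ff.
    have wr : worst_risk P tau f = r0%:E.
      apply/le_anti/andP; split; first exact: Pb.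
      rewrite (Pc f fL2) lee_fin; apply: (hmin f); split => // s; rewrite -(Pc f fL2); exact: Pa.
    split => //; split => // g Fg; have gL2 := hFL2 g Fg.
    rewrite wr (Pc g gL2) lee_fin; apply: (hmin g); split => // s; rewrite -(Pc g gL2); exact: Pa.
  - move=> [[Ff hmm] wr]; have fL2 := hFL2 f Ff.
    split; first by split => // s; rewrite -wr; exact: Pa.
    move=> g r' [Fg hg]; have gL2 := hFL2 g Fg.
    rewrite -lee_fin -wr; apply: le_trans (hmm g Fg) _; exact: Pb.
split; first by exists fs, r.
move=> f r0 [[Ff hf] hmin]; have fL2 := hFL2 f Ff.
have e1 : r0 <= r := hmin fs r feas_s.
have e2 : r <= r0 := lower f r0 (conj Ff hf).
have er : r0 = r by apply/le_anti; rewrite e1 e2.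
subst r0.
have hf' s : msr P f (tau s) <= r by have := hf s; rewrite (mseE fL2 (htau s)) lee_fin.
have hid := ID_r P S tau htau hq2 f q fL2 hq; rewrite -/fs -hr in hid.
have hsum : \sum_s q s * msr P f (tau s) <= r.
  rewrite -[r in _ <= r]mul1r -(proj2 hq) mulr_suml; apply: ler_sum => s _.
  by apply: ler_wpM2l; [exact: (proj1 hq) | exact: hf'].
have m0 : msr P f fs = 0 by have := @msr_ge0 _ _ _ P f fs; lra.
have hsum_eq : \sum_s q s * msr P f (tau s) = r by rewrite hid m0 add0r.
have hzero s : q s * (r - msr P f (tau s)) = 0.
  apply: (@psumr_eq0P _ _ predT (fun s => q s * (r - msr P f (tau s)))) => //.
    move=> i _; apply: mulr_ge0; [exact: (proj1 hq) | rewrite subr_ge0; exact: hf'].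
  rewrite (eq_bigr (fun i => q i * r - q i * msr P f (tau i))); last by move=> i _; ring.
  by rewrite sumrB -mulr_suml (proj2 hq) mul1r hsum_eq subrr.
exists q; split.
  have hm0 : mse P f fs = 0%E by rewrite (mseE fL2 fsL2) m0.
  have hae : ae_eq P setT (fun x => ((f x - fs x) ^+ 2)%:E) (cst 0%E).
    apply/(ae_eq_integral_abs P measurableT (mfsq (proj1 fL2) (proj1 fsL2))).
    by rewrite -hm0 /mse; apply: eq_integral => x _; rewrite gee0_abs // lee_fin sqr_ge0.
  apply: (filterS _ hae) => x /(_ Logic.I) /eqP; rewrite eqe sqrf_eq0 subr_eq0 => /eqP.
  done.
split.
  move=> s; rewrite (mseE fL2 (htau s)) -EFinB -EFinM; congr EFin.
  by rewrite -opprB mulrN hzero oppr0.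
split.
  by move=> s; rewrite (mseE fL2 (htau s)) lee_fin; exact: hf'.
by split; [exact: (proj2 hq) | exact: (proj1 hq)].
Qed.
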